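(* Consider a surviving Galton--Watson fractal model with initial set $J_0$ and contraction ratio $\rho$. If $r\ge \operatorname{diam}(J_0)\rho^n$, then $\operatorname{Fav}(S(r))\ge\operatorname{Fav}(S_n)$. If $0<r\le\varepsilon\rho^n$, then $\operatorname{Fav}(S(r))\le(1+O(\varepsilon))\operatorname{Fav}(S_n)$, where the implicit constant depends only on the model.
   Context: Galton--Watson (GW) fractal model: let $J_0\subset\mathbb{R}^2$ be a compact set equal to the closure of its interior, with finitely many connected components. Let $\mathfrak X=(\mathbf L;h_1(J_0),\dots,h_{\mathbf L}(J_0))$ be a random variable where $\mathbf L\in\{0,1,2,\dots\}$ is bounded, each $h_i$ is a homothety with contraction ratio $\rho\in(0,1)$ and $h_i(J_0)\subset J_0$, and $\mathbb{E}[\mathbf L]=\rho^{-1}$. Set $\mathcal{S}_0=\{J_0\}$, $S_0=J_0$; given $\mathcal{S}_n$, for each $R\in\mathcal{S}_n$ take an independent realization of $\mathfrak X$ and let $\mathcal{S}_{n+1}$ consist of the images $g_R(h^R_i(J_0))$ where $g_R$ is the homothety with $g_R(J_0)=R$; $S_{n+1}=\bigcup\mathcal{S}_{n+1}$, $S=\bigcap_nS_n$, and $S(r)$ is the $r$-neighbourhood of $S$. The model is surviving if $\mathbf L\ge1$ almost surely. $\operatorname{Fav}(A)=\int_0^\pi|\operatorname{proj}_\theta A|\,d\theta$ with $\operatorname{proj}_\theta(x)=\langle x,(-\sin\theta,\cos\theta)\rangle$. *)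

(* Defs.v *)
From HB Require Import structures.
From mathcomp Require Import all_boot all_order all_algebra.
From mathcomp Require Import all_classical all_reals all_analysis.
Set Implicit Arguments. Unset Strict Implicit. Unset Printing Implicit Defensive.
Import Order.TTheory GRing.Theory Num.Theory.
Import numFieldNormedType.Exports.
Local Open Scope classical_set_scope.
Local Open Scope ring_scope.

Section GW.
Variable R : realType.
Notation P2 := (R * R)%type.

Definition edist (x y : P2) : R :=
  Num.sqrt ((x.1 - y.1) ^+ 2 + (x.2 - y.2) ^+ 2).

Definition diam (A : set P2) : R :=
  sup [set edist x y | x in A & y in A].

(* closed r-neighbourhood { x | dist(x, A) <= r } (A compact below) *)
Definition nbhd_set (A : set P2) (r : R) : set P2 :=
  [set x | exists2 s, A s & edist x s <= r].

Definition proj (t : R) (x : P2) : R := - sin t * x.1 + cos t * x.2.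

Definition Fav (A : set P2) : \bar R :=
  (\int[@lebesgue_measure R]_(t in `[0%R, pi]) (@lebesgue_measure R) (proj t @` A))%E.

Definition homot (c : R) (v : P2) (x : P2) : P2 := (c * x.1 + v.1, c * x.2 + v.2).

(* A configuration (realization of the random variable X) is the list of
   translation vectors t_1..t_L of the homotheties h_i(x) = rho x + t_i;
   L is its size. A realization of the whole construction assigns an
   (independent) configuration conf w to every node (word) w. *)
Definition config := seq P2.

(* translation part T_w of g_w, where g_w(x) = rho^|w| x + T_w and
   g_{w++[i]} = g_w o h_i^{conf w} *)
Fixpoint transl_rev (rho : R) (conf : seq nat -> config) (w : seq nat) : P2 :=
  match w with
  | [::] => (0, 0)
  | i :: u =>
      let T := transl_rev rho conf u in
      let t := nth (0, 0) (conf (rev u)) i in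
      homot (rho ^+ size u) T t
  end.
(* words stored in reverse order (last letter first) *)
Fixpoint valid_rev (conf : seq nat -> config) (w : seq nat) : bool :=
  match w with
  | [::] => true
  | i :: u => (i < size (conf (rev u)))%N && valid_rev conf u
  end.

Definition gmap (rho : R) (conf : seq nat -> config) (w : seq nat) (x : P2) : P2 :=
  homot (rho ^+ size w) (transl_rev rho conf (rev w)) x.

Definition Sn (J0 : set P2) (rho : R) (conf : seq nat -> config) (n : nat) : set P2 :=
  \bigcup_(w in [set w : seq nat | size w = n /\ valid_rev conf (rev w)])
     (gmap rho conf w @` J0).

Definition Slim (J0 : set P2) (rho : R) (conf : seq nat -> config) : set P2 :=
  \bigcap_(n in [set: nat]) Sn J0 rho conf n.

End GW.

(* Main.v *)
Require Import Defs.
From HB Require Import structures.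
From mathcomp Require Import all_boot all_order all_algebra.
From mathcomp Require Import all_classical all_reals all_analysis.
From mathcomp Require Import ring lra zify.
Import Order.TTheory GRing.Theory Num.Theory.
Import numFieldNormedType.Exports.
Local Open Scope classical_set_scope.
Local Open Scope ring_scope.
Set Implicit Arguments. Unset Strict Implicit. Unset Printing Implicit Defensive.

Definition Ucup {T} (s : seq (set T)) := foldr setU set0 s.

Section OneD.
Variable R : realType.
Local Notation lam := (@lebesgue_measure R).

Lemma lmono (A B : set R) : A `<=` B -> (lam A <= lam B)%E.
Proof. move=> AB. rewrite /lebesgue_measure /lebesgue_stieltjes_measure /measure_extension.
exact: le_outer_measure. Qed.
Lemma lU2 (A B : set R) : (lam (A `|` B) <= lam A + lam B)%E.
Proof. rewrite /lebesgue_measure /lebesgue_stieltjes_measure /measure_extension.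
exact: outer_measureU2. Qed.

Definition IntvL (L : R) (A : set R) := exists a b : R,
  L <= b - a /\ [set` `]a, b[%R] `<=` A /\ A `<=` [set` `[a, b]%R].

Definition nb (U : set R) (r : R) := [set x | exists2 y, U y & `|x - y| <= r].

Fixpoint all_intv (L : R) (As : seq (set R)) : Prop :=
  match As with [::] => True | A :: As' => IntvL L A /\ all_intv L As' end.


Lemma IntvL_meas L A : IntvL L A -> measurable A.
Proof.
move=> [a [b [_ [sub1 sub2]]]].
have -> : A = [set` `]a, b[%R] `|` (A `&` [set a]) `|` (A `&` [set b]).
  apply/seteqP; split => [x Ax|x]; last first.
    by case=> [[/sub1|[]]|[]].
  have := sub2 _ Ax; rewrite /= in_itv /= => /andP[].
  rewrite le_eqVlt => /orP[/eqP ax|ax]; first by left; right; split.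
  rewrite le_eqVlt => /orP[/eqP xb|xb]; first by right; split.
  by left; left; rewrite /= in_itv /= ax xb.
apply: measurableU; first apply: measurableU.
- exact: measurable_itv.
- case: (pselect (A a)) => Aa.
    have -> : A `&` [set a] = [set a] by by apply/seteqP; split => [x []|x /= ->].
    exact: measurable_set1.
  have -> : A `&` [set a] = set0 by by apply/seteqP; split => x // [Ax /= xa]; apply: Aa; rewrite -xa.
  exact: measurable0.
- case: (pselect (A b)) => Aa.
    have -> : A `&` [set b] = [set b] by by apply/seteqP; split => [x []|x /= ->].
    exact: measurable_set1.
  have -> : A `&` [set b] = set0 by by apply/seteqP; split => x // [Ax /= xa]; apply: Aa; rewrite -xa.
  exact: measurable0.
Qed.

Lemma Ucup_meas L As : all_intv L As -> measurable (Ucup As).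
Proof.
elim: As => [|A As IH] /=; first by move=> _; exact: measurable0.
by move=> [/IntvL_meas mA /IH mU]; exact: measurableU.
Qed.


Lemma IntvL_bound L r A : 0 < L -> 0 <= r -> IntvL L A ->
  (lam (nb A r) <= (1 + 2 * r / L)%:E * lam A)%E.
Proof.
move=> L0 r0 [a [b [Lab [sub1 sub2]]]].
have h1 : (lam (nb A r) <= (b + r - (a - r))%:E)%E.
  apply: (le_trans (lmono (B := [set` `[a - r, b + r]%R]) _)).
    move=> x [y /sub2 /=]; rewrite !in_itv /= => /andP[ay yb] xy.
    move: xy; rewrite ler_norml => /andP[h1 h2].
    by apply/andP; split; lra.
  rewrite lebesgue_measure_itv /= lte_fin.
  by case: ifP => _ //; rewrite lee_fin; lra.
have h2 : ((b - a)%:E <= lam A)%E.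
  apply: (le_trans _ (lmono sub1)).
  by rewrite lebesgue_measure_itv /= lte_fin ifT ?EFinB //; lra.
apply: (le_trans h1).
apply: (@le_trans _ _ ((1 + 2 * r / L)%:E * (b - a)%:E)%E); last first.
  apply: lee_wpmul2l => //; rewrite lee_fin.
  have := divr_ge0 r0 (ltW L0); rewrite -mulrA; set q := r / L; lra.
rewrite -EFinM lee_fin.
have : 2 * r / L * L <= 2 * r / L * (b - a).
  by apply: ler_wpM2l => //; apply: divr_ge0 => //; [lra | exact: ltW].
rewrite divfK ?gt_eqF //.
by move=> h; rewrite mulrDl mul1r; lra.
Qed.


Lemma IntvL_merge L A B : IntvL L A -> IntvL L B -> A `&` B !=set0 ->
  IntvL L (A `|` B).
Proof.
move=> [a [b [Lab [sA1 sA2]]]] [a' [b' [Lab' [sB1 sB2]]]] [p [Ap Bp]].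
move: (sA2 _ Ap) (sB2 _ Bp); rewrite /= !in_itv /= => /andP[ap pb] /andP[a'p pb'].
exists (Order.min a a'), (Order.max b b'); split; [|split].
- have h1 : Order.min a a' <= a by rewrite ge_min lexx.
  have h2 : b <= Order.max b b' by rewrite le_max lexx.
  lra.
- move=> x /=; rewrite in_itv /= gt_min lt_max => /andP[/orP h1 /orP h2].
  case: (ltgtP x p) => [xp|px|->]; last by left.
  + case: h1 => h1.
      by left; apply: sA1; rewrite /= in_itv /= h1 /=; apply: (lt_le_trans xp).
    by right; apply: sB1; rewrite /= in_itv /= h1 /=; apply: (lt_le_trans xp).
  + case: h2 => h2.
      by left; apply: sA1; rewrite /= in_itv /= h2 andbT; apply: (le_lt_trans ap).
    by right; apply: sB1; rewrite /= in_itv /= h2 andbT; apply: (le_lt_trans a'p).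
- move=> y [/sA2|/sB2]; rewrite /= !in_itv /= => /andP[h1 h2].
    by rewrite ge_min le_max h1 h2.
  by rewrite ge_min le_max h1 h2 !orbT.
Qed.

Lemma Ucup_cat (s t : seq (set R)) : Ucup (s ++ t) = Ucup s `|` Ucup t.
Proof. by elim: s => [|A s IH] /=; rewrite ?set0U // IH setUA. Qed.

Lemma Ucup_filter (p : pred (set R)) (s : seq (set R)) :
  Ucup s = Ucup (seq.filter p s) `|` Ucup (seq.filter (predC p) s).
Proof.
elim: s => [|A s IH] /=; first by rewrite setU0.
case: (p A) => /=; rewrite IH.
  by rewrite setUA.
by rewrite setUCA.
Qed.

Lemma all_intv_filter L (p : pred (set R)) s : all_intv L s -> all_intv L (seq.filter p s).
Proof. by elim: s => [|A s IH] //= [h1 h2]; case: (p A) => /=; [split => //|]; exact: IH. Qed.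

Lemma all_intv_cat L s t : all_intv L s -> all_intv L t -> all_intv L (s ++ t).
Proof. by elim: s => [|A s IH] //= [h1 h2] ht; split => //; exact: IH. Qed.

Lemma nbU U V r : nb (U `|` V) r = nb U r `|` nb V r.
Proof.
apply/seteqP; split => x.
  by move=> [y [Uy|Vy] xy]; [left|right]; exists y.
by move=> [[y Uy xy]|[y Vy xy]]; exists y => //; [left|right].
Qed.

Lemma nb0 r : nb set0 r = set0.
Proof. by apply/seteqP; split => x // [y]. Qed.

Lemma disj_all (A : set R) (s : seq (set R)) : all (fun B => ~~ `[< A `&` B !=set0 >]) s -> A `&` Ucup s = set0.
Proof.
elim: s => [|B s IH] /=; first by rewrite setI0.
move=> /andP[/asboolPn h1 /IH h2]; rewrite setIUr h2 setU0.
by apply/seteqP; split => x // Ax; apply: h1; exists x.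
Qed.

Lemma oneD_aux L r n : 0 < L -> 0 <= r -> forall As, (size As <= n)%N -> all_intv L As ->
  (lam (nb (Ucup As) r) <= (1 + 2 * r / L)%:E * lam (Ucup As))%E.
Proof.
move=> L0 r0; elim: n => [|n IH] [|A Bs] //=.
- by move=> _ _; rewrite nb0 measure0 mule0.
- by move=> _ _; rewrite nb0 measure0 mule0.
move=> sz [hA hBs].
pose p := fun B : set R => `[< A `&` B !=set0 >].
have eU := Ucup_filter p Bs.
have hsz : (size (seq.filter p Bs) + size (seq.filter (predC p) Bs) = size Bs)%N.
  by rewrite !size_filter count_predC.
case E : (seq.filter p Bs) => [|B Bs1].
- have disj : A `&` Ucup Bs = set0.
    rewrite eU E /= set0U; apply: disj_all.
    exact: (filter_all (predC p)).
  have mA := IntvL_meas hA.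
  have mU := Ucup_meas hBs.
  rewrite nbU [X in (_ <= _ * X)%E]measureU //.
  apply: (le_trans (lU2 _ _)).
  have k0 : (0 <= 1 + 2 * r / L)%R.
    have := divr_ge0 r0 (ltW L0); rewrite -mulrA; set q := r / L; lra.
  rewrite ge0_muleDr //; last first.
  apply: leeD; first exact: IntvL_bound.
  by apply: IH => //.
- have pB : p B by have := filter_all p Bs; rewrite E => /andP[].
  have hB : all_intv L (seq.filter p Bs) := all_intv_filter p hBs.
  rewrite E /= in hB.
  have hC : all_intv L (seq.filter (predC p) Bs) := all_intv_filter (predC p) hBs.
  have -> : A `|` Ucup Bs = Ucup ((A `|` B) :: (Bs1 ++ seq.filter (predC p) Bs)).
    by rewrite /= Ucup_cat eU E /= !setUA.
  apply: IH.
    by rewrite /= size_cat; move: hsz sz; rewrite E /=; lia.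
  split; last by apply: all_intv_cat; [exact: hB.2|exact: hC].
  by apply: IntvL_merge => //; [exact: hB.1| exact/asboolP].
Qed.

Lemma oneD L r As : 0 < L -> 0 <= r -> all_intv L As ->
  (lam (nb (Ucup As) r) <= (1 + 2 * r / L)%:E * lam (Ucup As))%E.
Proof. by move=> L0 r0; apply: oneD_aux. Qed.

Lemma all_intvP L As : (forall A, A \in As -> IntvL L A) -> all_intv L As.
Proof.
elim: As => [|A As IH] //= H; split; first by apply: H; rewrite mem_head.
by apply: IH => B BAs; apply: H; rewrite in_cons BAs orbT.
Qed.

End OneD.

Section Integ.
Context d (T : measurableType d) (R : realType).
Variable mu : {measure set T -> \bar R}.
Import HBNNSimple.
Local Open Scope ereal_scope.

Lemma int_scale (D : set T) (f g : T -> \bar R) (k : R) : (0 < k)%R ->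
  (forall x, D x -> 0 <= f x) -> (forall x, D x -> 0 <= g x) ->
  (forall x, D x -> g x <= k%:E * f x) ->
  \int[mu]_(x in D) g x <= k%:E * \int[mu]_(x in D) f x.
Proof.
move=> k0 f0 g0 gf.
rewrite !ge0_integralE //.
apply: ge_ereal_sup => _ [h /= hg <-].
have ik0 : (0 <= k^-1)%R by rewrite invr_ge0 ltW.
pose h' := scale_nnsfun h ik0.
have -> : sintegral mu h = k%:E * sintegral mu h'.
  rewrite -sintegralrM; congr (sintegral mu _); apply/funext => x /=.
  by rewrite mulrA mulfV ?gt_eqF // mul1r.
rewrite lee_pmul2l ?lte_fin //.
apply: ereal_sup_ubound; exists h' => // x /=.
have := hg x; rewrite /patch; case: ifP => [/[1!inE] Dx|_].
  move=> hgx; have := le_trans hgx (gf x Dx).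
  move=> H.
  have := @lee_wpmul2l _ (k^-1)%:E ltac:(by rewrite lee_fin) _ _ H.
  by rewrite muleA -[((k^-1)%:E * k%:E)]EFinM mulVf ?gt_eqF // mul1e EFinM.
have hx0 : (0 <= h x)%R by [].
change (point : \bar R) with (0 : \bar R).
move=> hx. have : (h x = 0)%R by apply/le_anti; rewrite hx0 -lee_fin hx.
by move=> ->; rewrite mulr0.
Qed.

End Integ.

Section Words.
Variable R : realType.
Variables (rho : R) (conf : seq nat -> config R).

Lemma gmap_nil x : gmap rho conf [::] x = x.
Proof. by case: x => a b; rewrite /gmap /homot /= expr0 !mul1r !addr0. Qed.

Lemma gmap_rcons w i x : gmap rho conf (rcons w i) x =
  gmap rho conf w (homot rho (nth (0, 0) (conf w) i) x).
Proof.
rewrite /gmap rev_rcons /= revK size_rcons size_rev /homot /=.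
by congr pair; rewrite exprS; ring.
Qed.

Definition valid w := valid_rev conf (rev w).

Lemma valid_rcons w i : valid (rcons w i) = (i < size (conf w))%N && valid w.
Proof. by rewrite /valid rev_rcons /= revK. Qed.

Lemma proj_homot (t c : R) (v x : R * R) : Defs.proj t (homot c v x) = c * Defs.proj t x + Defs.proj t v.
Proof. by rewrite /Defs.proj /homot /=; ring. Qed.

Lemma gmapE w x : gmap rho conf w x = homot (rho ^+ size w) (gmap rho conf w (0, 0)) x.
Proof. by rewrite /gmap /homot /= !mulr0 !add0r. Qed.

Variable J0 : set (R * R).
Hypothesis hsub : forall u i, (i < size (conf u))%N ->
  homot rho (nth (0, 0) (conf u) i) @` J0 `<=` J0.

Lemma nest u v : valid (u ++ v) ->
  valid u /\ gmap rho conf (u ++ v) @` J0 `<=` gmap rho conf u @` J0.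
Proof.
elim/last_ind: v => [|v i IH]; first by rewrite cats0 => vu; split.
rewrite -rcons_cat valid_rcons => /andP[iv /IH [vu sub]]; split => //.
move=> y [a Ja <-]; apply: sub; rewrite gmap_rcons.
by exists (homot rho (nth (0, 0) (conf (u ++ v)) i) a) => //; apply: (hsub iv); exists a.
Qed.

End Words.

Section Metric.
Variable R : realType.

Lemma sqrt_le_abs (u v : R) : Num.sqrt (u ^+ 2 + v ^+ 2) <= `|u| + `|v|.
Proof.
have h0 : 0 <= `|u| + `|v| by rewrite addr_ge0.
apply: (@le_trans _ _ (Num.sqrt ((`|u| + `|v|) ^+ 2))); last first.
  by rewrite sqrtr_sqr ger0_norm.
apply: ler_wsqrtr.
have h1 := real_normK (num_real u); have h2 := real_normK (num_real v).
have h3 : 0 <= `|u| * `|v| by rewrite mulr_ge0.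
rewrite sqrrD; lra.
Qed.

Lemma edist_le (a b : R * R) : Defs.edist a b <= `|a.1 - b.1| + `|a.2 - b.2|.
Proof. exact: sqrt_le_abs. Qed.

Lemma edist_homot (c : R) v a b : 0 <= c ->
  Defs.edist (homot c v a) (homot c v b) = c * Defs.edist a b.
Proof.
move=> c0; rewrite /Defs.edist /homot /=.
have -> : (c * a.1 + v.1 - (c * b.1 + v.1)) ^+ 2 + (c * a.2 + v.2 - (c * b.2 + v.2)) ^+ 2
  = c ^+ 2 * ((a.1 - b.1) ^+ 2 + (a.2 - b.2) ^+ 2) by ring.
by rewrite sqrtrM ?sqrtr_sqr ?ger0_norm // sqr_ge0.
Qed.

Lemma cs_ineq (s c d1 d2 : R) : s ^+ 2 + c ^+ 2 = 1 ->
  (- s * d1 + c * d2) ^+ 2 <= d1 ^+ 2 + d2 ^+ 2.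
Proof.
move=> h.
have e : d1 ^+ 2 + d2 ^+ 2 = (- s * d1 + c * d2) ^+ 2 + (c * d1 + s * d2) ^+ 2.
  have -> : d1 ^+ 2 + d2 ^+ 2 = (s ^+ 2 + c ^+ 2) * (d1 ^+ 2 + d2 ^+ 2) by rewrite h mul1r.
  ring.
by rewrite e lerDl sqr_ge0.
Qed.

Lemma proj_lip (t : R) x y : `|Defs.proj t x - Defs.proj t y| <= Defs.edist x y.
Proof.
rewrite /Defs.edist -sqrtr_sqr; apply: ler_wsqrtr.
have h : sin t ^+ 2 + cos t ^+ 2 = 1 by rewrite sin2cos2 subrK.
rewrite /Defs.proj.
have -> : (- sin t * x.1 + cos t * x.2 - (- sin t * y.1 + cos t * y.2)) =
  - sin t * (x.1 - y.1) + cos t * (x.2 - y.2) by ring.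
exact: cs_ineq.
Qed.

End Metric.


Lemma UcupP {T : eqType} (s : seq (set T)) x :
  Ucup s x <-> exists2 C, C \in s & C x.
Proof.
elim: s => [|C s IH] /=; first by split => // [[C]]; rewrite in_nil.
split.
  case=> [Cx|/IH [D Ds Dx]]; first by exists C => //; rewrite mem_head.
  by exists D => //; rewrite in_cons Ds orbT.
move=> [D]; rewrite in_cons => /orP[/eqP -> Dx|Ds Dx]; first by left.
by right; apply/IH; exists D.
Qed.

Section Topo.
Variable R : realType.

Lemma cfst (x : R * R) : (fun y : R * R => y.1) @ x --> x.1.
Proof. exact: cvg_fst. Qed.
Lemma csnd (x : R * R) : (fun y : R * R => y.2) @ x --> x.2.
Proof. exact: cvg_snd. Qed.
Lemma cont_lin (a b c : R) : continuous (fun x : R * R => a * x.1 + b * x.2 + c).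
Proof.
move=> x.
exact: (cvgD (cvgD (cvgM (cvg_cst a) (@cfst x)) (cvgM (cvg_cst b) (@csnd x))) (cvg_cst c)).
Qed.
Lemma cont_homot (c : R) v : continuous (homot c v).
Proof.
move=> x; rewrite /homot.
exact: (cvg_pair (cvgD (cvgM (cvg_cst c) (@cfst x)) (cvg_cst v.1))
                 (cvgD (cvgM (cvg_cst c) (@csnd x)) (cvg_cst v.2))).
Qed.

Lemma unif_rad (s : seq (set (R * R))) :
  (forall C, C \in s -> exists2 e : R, 0 < e & exists y, ball y e `<=` C) ->
  exists2 d : R, 0 < d & forall C, C \in s -> exists y, ball y d `<=` C.
Proof.
elim: s => [|C s IH] H; first by exists 1 => // C; rewrite in_nil.
have [e e0 [y hy]] := H C (mem_head _ _).
have [d d0 hd] : exists2 d : R, 0 < d & forall C, C \in s -> exists y, ball y d `<=` C.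
  by apply: IH => D Ds; apply: H; rewrite in_cons Ds orbT.
exists (Order.min e d); first by rewrite lt_min e0 d0.
move=> D; rewrite in_cons => /orP[/eqP ->|Ds].
  by exists y; apply: subset_trans hy; apply: le_ball; rewrite ge_min lexx.
have [z hz] := hd D Ds.
by exists z; apply: subset_trans hz; apply: le_ball; rewrite ge_min lexx orbT.
Qed.

Lemma J0_decomp (J0 : set (R * R)) : compact J0 -> closure (interior J0) = J0 ->
  finite_set [set connected_component J0 x | x in J0] ->
  exists2 d : R, 0 < d & exists Cs : seq (set (R * R)), J0 = Ucup Cs /\
    forall C, C \in Cs -> [/\ C `<=` J0, connected C & exists y, ball y d `<=` C].
Proof.
move=> cJ clJ /finite_seqP [s hs].
have clJ0 : closed J0 := compact_closed (@norm_hausdorff _ _) cJ.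
have inS C : C \in s <-> exists2 x, J0 x & connected_component J0 x = C.
  by have := congr1 (fun P => P C) hs => /= ->; split.
have ball_in C : C \in s -> exists2 e : R, 0 < e & exists y, ball y e `<=` C.
  move=> /inS [x0 Jx0 <-].
  set C0 := connected_component J0 x0.
  pose Other := \bigcup_(D in [set D | D \in s /\ D `&` C0 = set0]) D.
  have cO : closed Other.
    apply: closed_bigcup.
      by apply: (@sub_finite_set _ _ [set` s]) => // D [].
    by move=> D [/inS [z Jz <-] _]; exact: component_closed.
  have sub : J0 `&` ~` Other `<=` C0.
    move=> z [Jz nO]; apply: contrapT => nCz; apply: nO.
    exists (connected_component J0 z); last exact: connected_component_refl.
    split; first by apply/inS; exists z.
    apply/seteqP; split => // w [hz hx].
    apply: nCz; rewrite /C0 (same_connected_component hx).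
    by rewrite -(same_connected_component hz); exact: connected_component_refl.
  have nOx : ~ Other x0.
    move=> [D [_ DC] Dx]; have : (D `&` C0) x0.
      by split => //; exact: connected_component_refl.
    by rewrite DC.
  have oU : open (~` Other) := closed_openC cO.
  have : closure (interior J0) x0 by rewrite clJ.
  move=> /(_ (~` Other)) [].
    by move: oU; rewrite openE => /(_ x0 nOx).
  move=> y [iy Uy].
  have : nbhs y (interior J0 `&` ~` Other).
    by have := openI (@open_interior _ J0) oU; rewrite openE => /(_ y (conj iy Uy)).
  move=> /nbhs_ballP [e e0 he]; exists e => //; exists y.
  move=> z /he [/interior_subset Jz nz]; exact: sub.
have [d d0 hd] := unif_rad ball_in.
exists d => //; exists s; split.
  apply/seteqP; split => x.
    move=> Jx; apply/UcupP; exists (connected_component J0 x).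
      by apply/inS; exists x.
    exact: connected_component_refl.
  by move=> /UcupP [C /inS [z Jz <-]]; exact: connected_component_sub.
move=> C Cs; split; last exact: hd.
  by move: Cs => /inS [z Jz <-]; exact: connected_component_sub.
by move: Cs => /inS [z Jz <-]; exact: component_connected.
Qed.

End Topo.

Section Bound.
Variable R : realType.

Lemma J0_bound (J0 : set (R * R)) : compact J0 ->
  exists M : R, forall x, J0 x -> `|x.1| <= M /\ `|x.2| <= M.
Proof.
move=> cJ; have [[a Ja]|J00] := pselect (J0 !=set0); last first.
  by exists 0 => x Jx; exfalso; apply: J00; exists x.
have PF : ProperFilter (globally J0) by apply: globally_properfilter; exact: Ja.
have := compact_bounded cJ => /(ex_bound) [M hM].
exists M => x /hM; rewrite /= prod_normE => h.
by split; apply: le_trans h; rewrite le_max lexx ?orbT.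
Qed.

Lemma edist_diam (J0 : set (R * R)) a b : compact J0 -> J0 a -> J0 b ->
  Defs.edist a b <= diam J0.
Proof.
move=> cJ Ja Jb; have [M hM] := J0_bound cJ.
apply: ub_le_sup; last by exists a => //; exists b.
exists (4 * M) => _ [x Jx [y Jy <-]].
apply: (le_trans (edist_le x y)).
have [h1 h2] := hM x Jx; have [h3 h4] := hM y Jy.
have := ler_normB x.1 y.1; have := ler_normB x.2 y.2.
lra.
Qed.

End Bound.

Section Part1.
Variable R : realType.
Variables (J0 : set (R * R)) (rho : R) (conf : seq nat -> config R).
Hypothesis cJ : compact J0.
Hypothesis rho0 : 0 < rho.
Hypothesis hsub : forall u i, (i < size (conf u))%N ->
  homot rho (nth (0, 0) (conf u) i) @` J0 `<=` J0.
Hypothesis hpos : forall u, (0 < size (conf u))%N.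

Local Notation g := (gmap rho conf).

Lemma gmap_cont w : continuous (g w).
Proof.
have -> : g w = homot (rho ^+ size w) (g w (0, 0)).
  by apply/funext => x; rewrite gmapE.
exact: cont_homot.
Qed.

Lemma gimg_closed w : closed (g w @` J0).
Proof.
apply: (compact_closed (@norm_hausdorff _ _)).
apply: continuous_compact => //.
exact/continuous_subspaceT/gmap_cont.
Qed.

Lemma Sn_sub_nbhd n r : diam J0 * rho ^+ n <= r ->
  Sn J0 rho conf n `<=` nbhd_set (Slim J0 rho conf) r.
Proof.
move=> hr y [w [sw vw] [a Ja <-]].
have vw' : valid conf w by [].
pose wk k := iter k (fun u => rcons u 0%N) w.
have vk k : valid conf (wk k) /\ size (wk k) = (n + k)%N.
  elim: k => [|k [IH1 IH2]]; first by rewrite addn0.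
  by rewrite /= valid_rcons size_rcons hpos IH1 -/(wk k) IH2 addnS.
pose B k := g (wk k) @` J0.
have Bdec k : B k.+1 `<=` B k.
  have := (nest hsub (u := wk k) (v := [:: 0%N])).
  by rewrite cats1 => /(_ (vk k.+1).1) [].
have Bdec' i j : (i <= j)%N -> B j `<=` B i.
  move=> /subnK <-; elim: (j - i)%N => [|k IH] //.
  by rewrite addSn; apply: subset_trans IH; exact: Bdec.
have B0J : B 0%N `<=` J0.
  have := nest hsub (u := [::]) (v := w); rewrite cat0s => /(_ vw') [_].
  by rewrite /B /= => h z /h [b Jb <-]; rewrite gmap_nil.
pose F := filter_from [set: nat] B.
have FF : Filter F.
  apply: filter_from_filter; first by exists 0%N.
  move=> i j _ _; exists (maxn i j) => //.
  move=> z Bz; split; [exact: (Bdec' i _ (leq_maxl i j) _ Bz)|exact: (Bdec' j _ (leq_maxr i j) _ Bz)].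
have PF : ProperFilter F.
  apply: filter_from_proper => k _; exists (g (wk k) a); exists a => //.
have [x [Jx clx]] : J0 `&` cluster F !=set0.
  by apply: cJ; exists 0%N.
have Bx k : B k x.
  apply: gimg_closed => N Nx.
  by apply: (clx (B k) N) => //; exists k.
have Sx : Slim J0 rho conf x.
  move=> m _; case: (leqP n m) => [nm|mn].
    exists (wk (m - n)%N); last exact: Bx.
    by split; [rewrite (vk _).2 subnKC|exact: (vk _).1].
  have := nest hsub (u := take m w) (v := drop m w); rewrite cat_take_drop.
  move=> /(_ vw') [vt sub]; exists (take m w); last exact: sub (Bx 0%N).
  by split => //; rewrite size_take sw mn.
exists x => //.
have [b Jb <-] := Bx 0%N.
rewrite [g w a]gmapE [g w b]gmapE (edist_homot _ _ _ (exprn_ge0 _ (ltW rho0))) sw.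
apply: (le_trans _ hr); rewrite [X in _ <= X]mulrC; apply: ler_wpM2l; first by rewrite exprn_ge0 ?ltW.
exact: edist_diam.
Qed.

End Part1.

Section IntvOf.
Variable R : realType.

Lemma intv_of (A : set R) (L c m : R) : 0 < L -> is_interval A ->
  (forall x, A x -> `|x| <= m) -> (forall x, c < x < c + L -> A x) -> IntvL L A.
Proof.
move=> L0 iA bA cA.
have Am : A (c + L / 2) by apply: cA; apply/andP; split; lra.
have hub : has_ubound A.
  by exists m => x /bA; rewrite ler_norml => /andP[].
have hlb : has_lbound A.
  by exists (- m) => x /bA; rewrite ler_norml => /andP[].
have hs : has_sup A by split => //; exists (c + L / 2).
have hi : has_inf A by split => //; exists (c + L / 2).
have s1 : c + L / 2 <= sup A := ub_le_sup hub Am.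
have i1 : inf A <= c + L / 2 := ge_inf hlb Am.
exists (inf A), (sup A); split; [|split].
- have h1 : c + L <= sup A.
    rewrite leNgt; apply/negP => hlt.
    have hz : A ((sup A + c + L) / 2) by apply: cA; apply/andP; split; lra.
    have := ub_le_sup hub hz; lra.
  have h2 : inf A <= c.
    rewrite leNgt; apply/negP => hlt.
    have hz : A ((c + inf A) / 2) by apply: cA; apply/andP; split; lra.
    have := ge_inf hlb hz; lra.
  lra.
- move=> x /=; rewrite in_itv /= => /andP[ix xs].
  have [e Ae he] := @sup_adherent _ A (sup A - x) ltac:(by rewrite subr_gt0) hs.
  have [e' Ae' he'] := @inf_adherent _ A (x - inf A) ltac:(by rewrite subr_gt0) hi.
  by apply: (iA e' e) => //; apply/andP; split; apply: ltW; lra.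
- move=> x Ax /=; rewrite in_itv /=.
  by rewrite (ge_inf hlb Ax) (ub_le_sup hub Ax).
Qed.

End IntvOf.

Section Part2.
Variable R : realType.
Variables (J0 : set (R * R)) (rho : R) (conf : seq nat -> config R).
Hypothesis cJ : compact J0.
Hypothesis rho0 : 0 < rho.
Variables (d : R) (Cs : seq (set (R * R))).
Hypothesis d0 : 0 < d.
Hypothesis hC : forall C, C \in Cs -> [/\ C `<=` J0, connected C & exists y, ball y d `<=` C].

Local Notation g := (gmap rho conf).

Lemma lin_bound (k s c a b M0 : R) : 0 <= k -> `|s| <= 1 -> `|c| <= 1 ->
  `|a| <= M0 -> `|b| <= M0 -> `|k * - s * a + k * c * b| <= k * (M0 + M0).
Proof.
move=> k0 hs hc ha hb.
apply: (le_trans (ler_normD _ _)).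
have e1 : `|k * - s * a| = k * (`|s| * `|a|) by rewrite !normrM normrN ger0_norm // mulrA.
have e2 : `|k * c * b| = k * (`|c| * `|b|) by rewrite !normrM ger0_norm // mulrA.
rewrite e1 e2 -mulrDr; apply: ler_wpM2l => //.
apply: lerD; rewrite -[M0]mul1r; apply: ler_pM => //.
Qed.

Lemma fE (t : R) w : (fun x => Defs.proj t (g w x)) =
  (fun x : R * R => (rho ^+ size w * - sin t) * x.1 + (rho ^+ size w * cos t) * x.2
     + Defs.proj t (g w (0, 0))).
Proof.
apply/funext => x; rewrite gmapE proj_homot /Defs.proj; ring.
Qed.

Lemma PA_intv t w C : C \in Cs ->
  IntvL (2 * d * rho ^+ size w) (Defs.proj t @` (g w @` C)).
Proof.
move=> /hC [CJ connC [y hy]].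
set k := rho ^+ size w.
have k0 : 0 < k by rewrite exprn_gt0.
set f := fun x => Defs.proj t (g w x).
have -> : Defs.proj t @` (g w @` C) = f @` C by rewrite image_comp.
have fx z : f z = (k * - sin t) * z.1 + (k * cos t) * z.2 + Defs.proj t (g w (0, 0)).
  by rewrite /f gmapE proj_homot /Defs.proj /k; ring.
have fcont : continuous f by rewrite /f fE; exact: cont_lin.
have [M0 hM0] := J0_bound cJ.
apply: (@intv_of _ _ _ (f y - d * k) (k * (M0 + M0) + `|Defs.proj t (g w (0, 0))|)).
- by rewrite mulr_gt0 // mulr_gt0.
- apply/connected_intervalP; apply: connected_continuous_connected => //.
  exact: continuous_subspaceT.
- move=> _ [x Cx <-]; have [h1 h2] := hM0 x (CJ x Cx).
  rewrite fx.
  have hs := sin_max t; have hc := cos_max t.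
  apply: (le_trans (ler_normD _ _)); apply: lerD => //.
  exact: (lin_bound (ltW k0) hs hc h1 h2).
- move=> x /andP[h1 h2].
  set s := (x - f y) / k.
  have sd : `|s| < d.
    have ik : 0 <= k^-1 by rewrite invr_ge0 ltW.
    rewrite /s normrM (ger0_norm ik) ltr_pdivrMr // ltr_norml.
    apply/andP; split; lra.
  pose q := (y.1 - s * sin t, y.2 + s * cos t).
  exists q.
    apply: hy; split => /=; rewrite /ball /=.
      rewrite opprB addrC subrK normrM; apply: le_lt_trans sd.
      by rewrite -[X in _ <= X]mulr1; apply: ler_wpM2l => //; exact: sin_max.
    rewrite opprD addNKr normrN normrM; apply: le_lt_trans sd.
    by rewrite -[X in _ <= X]mulr1; apply: ler_wpM2l => //; exact: cos_max.
  rewrite !fx /q /=.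
  have h : sin t ^+ 2 + cos t ^+ 2 = 1 by rewrite sin2cos2 subrK.
  have -> : k * - sin t * (y.1 - s * sin t) + k * cos t * (y.2 + s * cos t)
      = k * - sin t * y.1 + k * cos t * y.2 + k * s * (sin t ^+ 2 + cos t ^+ 2) by ring.
  rewrite h mulr1 /s [k * (_ / k)]mulrC divfK ?gt_eqF // fx; ring.
Qed.


Fixpoint Wall (M n : nat) : seq (seq nat) :=
  match n with
  | 0 => [:: [::]]
  | n'.+1 => [seq rcons w i | w <- Wall M n', i <- iota 0 M]
  end.

Lemma Wall_size M n w : w \in Wall M n -> size w = n.
Proof.
elim: n w => [|n IH] w /=; first by rewrite inE => /eqP ->.
by move=> /allpairsP [[u i] [/= /IH hu _ ->]]; rewrite size_rcons hu.
Qed.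

Variable M : nat.
Hypothesis hM : forall u, (size (conf u) <= M)%N.

Lemma Wall_mem n w : size w = n -> valid conf w -> w \in Wall M n.
Proof.
elim: n w => [|n IH] w /=; first by move/size0nil ->; rewrite inE.
case/lastP: w => [//|u i]; rewrite size_rcons => -[su].
rewrite valid_rcons => /andP[iu vu].
apply: allpairs_f; first exact: IH.
by rewrite mem_iota add0n (leq_trans iu (hM u)).
Qed.

Hypothesis hJ : J0 = Ucup Cs.
Local Notation lam := (@lebesgue_measure R).

Lemma pointwise t n eps r : 0 < eps -> 0 < r <= eps * rho ^+ n ->
  (lam (Defs.proj t @` nbhd_set (Slim J0 rho conf) r) <=
   (1 + d^-1 * eps)%:E * lam (Defs.proj t @` Sn J0 rho conf n))%E.
Proof.
move=> e0 /andP[r0 re].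
have rn0 : 0 < rho ^+ n by rewrite exprn_gt0.
set L := 2 * d * rho ^+ n.
have L0 : 0 < L by rewrite /L !mulr_gt0.
set Ws := [seq w <- Wall M n | valid conf w].
set As := [seq Defs.proj t @` (g w @` C) | w <- Ws, C <- Cs].
have hall : all_intv L As.
  apply: all_intvP => A /allpairsP [[w C] [/= wW CC ->]].
  move: wW; rewrite mem_filter => /andP[_ /Wall_size sw].
  by rewrite /L -sw; exact: PA_intv.
have inc1 : Defs.proj t @` nbhd_set (Slim J0 rho conf) r `<=` nb (Ucup As) r.
  move=> _ [x [s Ss xs] <-].
  have [w [sw vw] [a Ja sE]] := Ss n I; subst s.
  move: Ja; rewrite hJ => /UcupP [C CC Ca].
  exists (Defs.proj t (g w a)); last exact: le_trans (proj_lip _ _ _) xs.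
  apply/UcupP; exists (Defs.proj t @` (g w @` C)); last by exists (g w a) => //; exists a.
  apply: (allpairs_f (fun w C => Defs.proj t @` (g w @` C))) => //.
  by rewrite mem_filter; apply/andP; split => //; exact: Wall_mem.
have inc2 : Ucup As `<=` Defs.proj t @` Sn J0 rho conf n.
  move=> z /UcupP [A /allpairsP [[w C] [/= wW CC ->]]] [_ [a Ca <-] <-].
  move: wW; rewrite mem_filter => /andP[vw /Wall_size sw].
  exists (g w a) => //; exists w => //; exists a => //.
  by have [CJ _ _] := hC CC; exact: CJ.
apply: (le_trans (lmono inc1)).
apply: (le_trans (oneD L0 (ltW r0) hall)).
apply: lee_pmul => //.
- by rewrite lee_fin; have := divr_ge0 (ltW r0) (ltW L0); rewrite -mulrA; set q := r / L; lra.
- rewrite lee_fin lerD2l ler_pdivrMr //.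
  have -> : d^-1 * eps * L = 2 * (eps * rho ^+ n) by rewrite /L; field; rewrite gt_eqF.
  lra.
- exact: lmono.
Qed.

End Part2.

Unset Implicit Arguments.

Theorem lemma3p2 (R : realType) (J0 : set (R * R)%type) (rho : R)
  (d : measure_display) (Omega : measurableType d)
  (P : probability Omega R) (X : Omega -> config R) :
  compact J0 ->
  closure (interior J0) = J0 ->
  finite_set [set connected_component J0 x | x in J0] ->
  0 < rho < 1 ->
  measurable_fun setT (fun w => (size (X w))%:R : R) ->
  (exists M : nat, forall w, (size (X w) <= M)%N) ->
  (forall w i, (i < size (X w))%N ->
     homot rho (nth (0, 0) (X w) i) @` J0 `<=` J0) ->
  (\int[P]_w ((size (X w))%:R : R)%:E = (rho^-1)%:E)%E ->
  P [set w | (1 <= size (X w))%N] = 1%E ->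
  (forall conf : seq nat -> config R,
     (forall u, range X (conf u) /\ (1 <= size (conf u))%N) ->
     forall (n : nat) (r : R), diam J0 * rho ^+ n <= r ->
       (Fav (Sn J0 rho conf n) <= Fav (nbhd_set (Slim J0 rho conf) r))%E)
  /\
  (exists C eps0 : R, 0 < C /\ 0 < eps0 /\
     forall conf : seq nat -> config R,
     (forall u, range X (conf u) /\ (1 <= size (conf u))%N) ->
     forall (n : nat) (eps r : R), 0 < eps <= eps0 -> 0 < r <= eps * rho ^+ n ->
       (Fav (nbhd_set (Slim J0 rho conf) r) <= (1 + C * eps)%:E * Fav (Sn J0 rho conf n))%E).
Proof.
move=> cJ clJ finC /andP[rho0 _] _ [M hM] hsubX _ _.
have conf_facts (conf : seq nat -> config R) :
    (forall u, range X (conf u) /\ (1 <= size (conf u))%N) ->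
    [/\ forall u i, (i < size (conf u))%N ->
          homot rho (nth (0, 0) (conf u) i) @` J0 `<=` J0,
        forall u, (0 < size (conf u))%N &
        forall u, (size (conf u) <= M)%N].
  move=> hc; split => u.
  - by have [[w _ <-] _] := hc u; exact: hsubX.
  - by have [_ ?] := hc u.
  - by have [[w _ <-] _] := hc u; exact: hM.
split.
{ move=> conf hc n r hr; have [hsub hpos _] := conf_facts conf hc.
  rewrite /Fav.
  rewrite -[X in (_ <= X)%E]mul1e.
  apply: int_scale => //.
  all: move=> t _ /=.
  all: try (by apply: measure_ge0).
  rewrite mul1e; apply: lmono; apply: image_subset.
  exact: (Sn_sub_nbhd cJ rho0 hsub hpos hr). }
have [dd d0 [Cs [hJ hC]]] := J0_decomp cJ clJ finC.
exists dd^-1, 1; split; first by rewrite invr_gt0.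
split => // conf hc n eps r /andP[e0 _] hr.
have [hsub hpos hM'] := conf_facts conf hc.
rewrite /Fav; apply: int_scale.
  have := divr_ge0 (ltW e0) (ltW d0); rewrite mulrC; lra.
- by move=> t _ /=; apply: measure_ge0.
- by move=> t _ /=; apply: measure_ge0.
- move=> t _; exact: (pointwise cJ rho0 d0 hC hM' hJ).
Qed.
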